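(* For every integer $k\ge1$, the free commutative semigroup on $k$ generators, i.e. $((\mathbb N\cup\{0\})^k\setminus\{(0,\dots,0)\},+)$ (in particular $(\mathbb N,+)$), is left and right fairly amenable.
   Context: For a semigroup $U$, $s\in U$, $A\subseteq U$: $s$ acts injectively on the left (right) of $A$ if $a\mapsto sa$ ($a\mapsto as$) is injective on $A$. A finitely-additive probability measure on $U$ is $\mu:\mathcal P(U)\to[0,1]$ with $\mu(U)=1$, additive on disjoint sets; it is left fairly invariant if $\mu(sA)=\mu(A)$ whenever $s$ acts injectively on the left of $A$ (right fairly invariant analogously with $As$). $U$ is left (right) fairly amenable if such a measure exists. *)

(* Defs.v *)
From Stdlib Require Import Reals List Lia.
Import ListNotations.
Open Scope R_scope.

Definition acts_inj_left {U : Type} (op : U -> U -> U) (s : U) (A : U -> Prop) : Prop :=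
  forall a b, A a -> A b -> op s a = op s b -> a = b.
Definition acts_inj_right {U : Type} (op : U -> U -> U) (s : U) (A : U -> Prop) : Prop :=
  forall a b, A a -> A b -> op a s = op b s -> a = b.

Definition lmul_set {U : Type} (op : U -> U -> U) (s : U) (A : U -> Prop) : U -> Prop :=
  fun x => exists a, A a /\ x = op s a.
Definition rmul_set {U : Type} (op : U -> U -> U) (s : U) (A : U -> Prop) : U -> Prop :=
  fun x => exists a, A a /\ x = op a s.

Definition fa_prob_measure {U : Type} (mu : (U -> Prop) -> R) : Prop :=
  (forall A, 0 <= mu A <= 1) /\
  mu (fun _ => True) = 1 /\
  (forall A B : U -> Prop, (forall x, A x -> B x -> False) ->
     mu (fun x => A x \/ B x) = mu A + mu B).

Definition left_fairly_invariant {U : Type} (op : U -> U -> U) (mu : (U -> Prop) -> R) : Prop :=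
  forall s A, acts_inj_left op s A -> mu (lmul_set op s A) = mu A.
Definition right_fairly_invariant {U : Type} (op : U -> U -> U) (mu : (U -> Prop) -> R) : Prop :=
  forall s A, acts_inj_right op s A -> mu (rmul_set op s A) = mu A.

Definition left_fairly_amenable {U : Type} (op : U -> U -> U) : Prop :=
  exists mu, fa_prob_measure mu /\ left_fairly_invariant op mu.
Definition right_fairly_amenable {U : Type} (op : U -> U -> U) : Prop :=
  exists mu, fa_prob_measure mu /\ right_fairly_invariant op mu.

(** The free commutative semigroup on k generators:
    (N ∪ {0})^k \ {(0,...,0)} under coordinatewise addition,
    with vectors represented as lists of length k. *)
Fixpoint vadd (u v : list nat) : list nat :=
  match u, v with
  | a :: u', b :: v' => (a + b)%nat :: vadd u' v'
  | _, _ => []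
  end.

Definition nonzero_vec (k : nat) (v : list nat) : Prop :=
  length v = k /\ exists n, In n v /\ n <> 0%nat.

Definition FCS (k : nat) : Type := { v : list nat | nonzero_vec k v }.

Lemma vadd_nonzero (k : nat) (u v : list nat) :
  nonzero_vec k u -> nonzero_vec k v -> nonzero_vec k (vadd u v).
Proof.
  intros [Hu [n [Hn Hn0]]] [Hv _]. subst k.
  revert v Hv. induction u as [|a u IH]; intros [|b v] Hv; simpl in *; try discriminate.
  - contradiction.
  - injection Hv as Hv. destruct Hn as [<-|Hn].
    + split; [f_equal|].
      * clear IH. revert v Hv; induction u; intros [|? ?] Hv; simpl in *; try discriminate; auto.
      * exists (a + b)%nat; split; [left; reflexivity | lia].
    + destruct (IH Hn v Hv) as [Hl [m [Hm Hm0]]].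
      split; [simpl; f_equal; assumption|].
      exists m; split; [right; exact Hm | exact Hm0].
Qed.

Definition fcs_add (k : nat) (x y : FCS k) : FCS k :=
  exist _ (vadd (proj1_sig x) (proj1_sig y))
        (vadd_nonzero k _ _ (proj2_sig x) (proj2_sig y)).

(* Main.v *)
Require Import Defs.
From Stdlib Require Import Reals List.
From Stdlib Require Import Lra Lia FunctionalExtensionality ProofIrrelevance ClassicalEpsilon PropExtensionality.
Import ListNotations.
Local Open Scope R_scope.

Section P2.
Variable m : (nat -> R) -> R.
Definition b01 (f : nat -> R) := forall n, 0 <= f n <= 1.
Hypothesis mB : forall f, b01 f -> 0 <= m f <= 1.
Hypothesis m1 : m (fun _ => 1) = 1.
Hypothesis mD : forall f g, b01 f -> b01 g -> m (fun n => f n + g n) = m f + m g.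
Hypothesis mS : forall f, b01 f -> m (fun n => f (S n)) = m f.

Fixpoint Mk (k : nat) (h : list nat -> R) : R :=
  match k with
  | O => h []
  | S k' => m (fun x => Mk k' (fun v => h (x :: v)))
  end.

Definition B01 (h : list nat -> R) := forall v, 0 <= h v <= 1.

Lemma Mk_bound k : forall h, B01 h -> 0 <= Mk k h <= 1.
Proof.
  induction k as [|k IH]; intros h hh; simpl.
  - apply hh.
  - apply mB. intro x. apply IH. intro v. apply hh.
Qed.

Lemma Mk_one k : Mk k (fun _ => 1) = 1.
Proof.
  induction k as [|k IH]; simpl; auto.
  transitivity (m (fun _ => 1)); [|exact m1].
  f_equal. apply functional_extensionality. intro x. exact IH.
Qed.

Lemma Mk_add k : forall h h', B01 h -> B01 h' ->
  Mk k (fun v => h v + h' v) = Mk k h + Mk k h'.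
Proof.
  induction k as [|k IH]; intros h h' hh hh'; simpl; auto.
  rewrite <- mD.
  - f_equal. apply functional_extensionality. intro x. apply IH; intro v; auto.
  - intro x. apply Mk_bound. intro v; auto.
  - intro x. apply Mk_bound. intro v; auto.
Qed.

Lemma Mk_ext k : forall h h', (forall v, length v = k -> h v = h' v) -> Mk k h = Mk k h'.
Proof.
  induction k as [|k IH]; intros h h' H; simpl.
  - apply H; reflexivity.
  - f_equal. apply functional_extensionality. intro x. apply IH.
    intros v Hv. apply H. simpl. rewrite Hv. reflexivity.
Qed.

Lemma m_shift a : forall f, b01 f -> m (fun x => f (x + a)%nat) = m f.
Proof.
  induction a as [|a IH]; intros f hf.
  - f_equal. apply functional_extensionality. intro x. rewrite Nat.add_0_r. reflexivity.
  - rewrite <- (IH f hf).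
    rewrite <- (mS (fun x => f (x + a)%nat)).
    + f_equal. apply functional_extensionality. intro x. f_equal. lia.
    + intro x. apply hf.
Qed.

Lemma Mk_trans k : forall h s, B01 h -> length s = k ->
  Mk k (fun v => h (vadd v s)) = Mk k h.
Proof.
  induction k as [|k IH]; intros h s hh Hs.
  - destruct s; [reflexivity | discriminate].
  - destruct s as [|a s]; [discriminate|]. simpl in Hs. injection Hs as Hs.
    simpl.
    transitivity (m (fun x => Mk k (fun v => h ((x + a)%nat :: v)))).
    + f_equal. apply functional_extensionality. intro x.
      apply (IH (fun v => h ((x + a)%nat :: v)) s); auto. intro v; apply hh.
    + apply (m_shift a (fun x => Mk k (fun v => h (x :: v)))).
      intro x. apply Mk_bound. intro v; auto.
Qed.

Lemma Mk_zero_fun k : Mk k (fun _ => 0) = 0.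
Proof.
  assert (H := Mk_add k (fun _ => 0) (fun _ => 0)).
  assert (E : (fun _ : list nat => 0 + 0) = (fun _ => 0)).
  { apply functional_extensionality; intro; lra. }
  cbv beta in H; rewrite E in H. assert (B : B01 (fun _ => 0)) by (intro; lra).
  specialize (H B B). lra.
Qed.

Lemma m_zero : m (fun _ => 0) = 0.
Proof.
  assert (H := mD (fun _ => 0) (fun _ => 0)).
  assert (E : (fun _ : nat => 0 + 0) = (fun _ => 0)).
  { apply functional_extensionality; intro; lra. }
  cbv beta in H; rewrite E in H. assert (B : b01 (fun _ => 0)) by (intro; lra).
  specialize (H B B). lra.
Qed.

Lemma Mk_zero k : forall h, B01 h ->
  (forall v, length v = S k -> h v <> 0 -> Forall (fun n => n = 0%nat) v) ->
  Mk (S k) h = 0.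
Proof.
  intros h hh Hz. simpl.
  rewrite <- mS.
  - rewrite <- m_zero. f_equal. apply functional_extensionality. intro x.
    rewrite <- (Mk_zero_fun k). apply Mk_ext. intros v Hv.
    destruct (Req_dec (h (S x :: v)) 0) as [E|E]; auto.
    exfalso. apply Hz in E; [| simpl; rewrite Hv; reflexivity].
    inversion E. discriminate.
  - intro x. apply Mk_bound. intro; auto.
Qed.


Lemma vadd_comm : forall u v, vadd u v = vadd v u.
Proof.
  induction u as [|a u IH]; intros [|b v]; simpl; auto.
  rewrite IH, Nat.add_comm; reflexivity.
Qed.

Lemma vadd_cancel : forall v w s, length v = length s -> length w = length s ->
  vadd v s = vadd w s -> v = w.
Proof.
  induction v as [|a v IH]; intros [|b w] [|c s] Hv Hw E; simpl in *;
    try discriminate; auto.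
  injection Hv as Hv. injection Hw as Hw. injection E as E1 E2.
  f_equal; [lia|]. apply (IH w s); auto.
Qed.

Lemma fcs_eq k (x y : FCS k) : proj1_sig x = proj1_sig y -> x = y.
Proof.
  destruct x as [x px], y as [y py]; simpl; intro E; subst y.
  f_equal; apply proof_irrelevance.
Qed.

Definition ind k (A : FCS k -> Prop) (v : list nat) : R :=
  if excluded_middle_informative (exists p : nonzero_vec k v, A (exist _ v p)) then 1 else 0.

Lemma ind_B01 k A : B01 (ind k A).
Proof. intro v; unfold ind; destruct excluded_middle_informative; lra. Qed.

Definition mu k (A : FCS k -> Prop) : R := Mk k (ind k A).

Lemma mu_right k s (A : FCS k -> Prop) : mu k (rmul_set (fcs_add k) s A) = mu k A.
Proof.
  unfold mu. destruct s as [sv ps].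
  etransitivity; [symmetry; apply (Mk_trans k _ sv); [apply ind_B01|apply ps]|].
  apply Mk_ext. intros v Hv. unfold ind.
  destruct excluded_middle_informative as [H1|H1];
  destruct excluded_middle_informative as [H2|H2]; auto; exfalso.
  - apply H2. destruct H1 as [p' [a [Aa E]]].
    apply (f_equal (@proj1_sig _ _)) in E. simpl in E.
    destruct a as [av pa]. simpl in E.
    assert (av = v).
    { apply (vadd_cancel av v sv); auto.
      - destruct pa, ps; congruence.
      - destruct ps; congruence. }
    subst av. exists pa. exact Aa.
  - apply H1. destruct H2 as [p Ap].
    exists (vadd_nonzero k v sv p ps). exists (exist _ v p). split; auto.
Qed.

Lemma lmul_rmul k s (A : FCS k -> Prop) : lmul_set (fcs_add k) s A = rmul_set (fcs_add k) s A.
Proof.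
  apply functional_extensionality; intro x. apply propositional_extensionality.
  unfold lmul_set, rmul_set.
  assert (C : forall a, fcs_add k s a = fcs_add k a s).
  { intro a. apply fcs_eq. simpl. apply vadd_comm. }
  split; intros [a [Aa E]]; exists a; rewrite C in *; auto.
Qed.

Lemma mu_prob k : (1 <= k)%nat -> fa_prob_measure (mu k).
Proof.
  intro hk. split; [|split].
  - intro A. apply Mk_bound, ind_B01.
  - unfold mu.
    set (z := fun v => 1 - ind k (fun _ => True) v).
    assert (Hz : Mk k z = 0).
    { destruct k as [|k']; [lia|]. apply Mk_zero.
      - intro v; unfold z, ind; destruct excluded_middle_informative; lra.
      - intros v Hv Hnz. unfold z, ind in Hnz.
        destruct excluded_middle_informative as [H|H]; [lra|].
        apply Forall_forall. intros n Hn.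
        destruct (Nat.eq_dec n 0) as [|Hn0]; auto. exfalso. apply H.
        assert (p : nonzero_vec (S k') v) by (split; auto; exists n; auto).
        exists p; exact I. }
    assert (E := Mk_add k (ind k (fun _ => True)) z (ind_B01 _ _)).
    assert (Bz : B01 z) by (intro v; unfold z, ind; destruct excluded_middle_informative; lra).
    specialize (E Bz).
    assert (F : (fun v => ind k (fun _ => True) v + z v) = (fun _ => 1)).
    { apply functional_extensionality; intro v; unfold z; lra. }
    rewrite F, Mk_one, Hz in E. lra.
  - intros A B HAB. unfold mu. rewrite <- Mk_add by apply ind_B01.
    apply Mk_ext. intros v _. unfold ind.
    destruct (excluded_middle_informative (exists p : nonzero_vec k v, A (exist _ v p))) as [H2|H2];
    destruct (excluded_middle_informative (exists p : nonzero_vec k v, B (exist _ v p))) as [H3|H3];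
    destruct excluded_middle_informative as [H1|H1]; try lra; exfalso.
    all: repeat match goal with
         | H : exists _ : _, _ \/ _ |- _ => destruct H as [? [?|?]]
         | H : exists _, _ |- _ => destruct H
         end.
    all: repeat match goal with p : nonzero_vec ?a ?b, q : nonzero_vec ?a ?b |- _ =>
           let E := fresh in assert (E : p = q) by apply proof_irrelevance; subst q end.
    all: eauto.
    all: firstorder.
Qed.

Lemma final k : (1 <= k)%nat ->
  left_fairly_amenable (fcs_add k) /\ right_fairly_amenable (fcs_add k).
Proof.
  intro hk. split; exists (mu k); split; try apply mu_prob; auto.
  - intros s A _. rewrite lmul_rmul. apply mu_right.
  - intros s A _. apply mu_right.
Qed.

End P2.

Definition MeanProps (m : (nat -> R) -> R) : Prop :=
  (forall f, b01 f -> 0 <= m f <= 1) /\ m (fun _ => 1) = 1 /\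
  (forall f g, b01 f -> b01 g -> m (fun n => f n + g n) = m f + m g) /\
  (forall f, b01 f -> m (fun n => f (S n)) = m f).

Module MC.
From HB Require Import structures.
From mathcomp Require Import all_boot all_order all_algebra.
From mathcomp Require Import all_classical all_reals all_analysis.
From mathcomp Require Import Rstruct Rstruct_topology.
From mathcomp Require Import lra.
Set Implicit Arguments. Unset Strict Implicit. Unset Printing Implicit Defensive.
Import Order.TTheory GRing.Theory Num.Theory.
Import numFieldNormedType.Exports.
Local Open Scope classical_set_scope.
Local Open Scope ring_scope.

Section M.
Variable RR : realType.

Lemma ultra_bounded (G : set_system nat) (GU : UltraFilter G) (u : nat -> RR) (a b : RR) :
  (forall n, a <= u n <= b) -> exists l, a <= l <= b /\ u @ G --> l.
Proof.
move=> hu.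
have PF : ProperFilter (u @ G) by exact: fmap_proper_filter.
have Gab : (u @ G) `[a, b]%classic.
  have : G (u @^-1` `[a, b]%classic).
    apply: filterS (@filterT _ G _) => n _ /=.
    by rewrite in_itv /= hu.
  by [].
have [p [abp clp]] := segment_compact PF Gab.
exists p; split; first by move: abp; rewrite /= in_itv /=.
move=> V Vp.
have [//|GnV] := in_ultra_setVsetC (u @^-1` V) GU.
have : (u @ G) (~` V) by [].
move=> /clp => /(_ _ Vp) [x [nVx Vx]].
by case: nVx.
Qed.

Definition avg (f : nat -> RR) (n : nat) : RR := (\sum_(i < n.+1) f i) / n.+1%:R.

Lemma avg_bound f : (forall n, 0 <= f n <= 1) -> forall n, 0 <= avg f n <= 1.
Proof.
move=> hf n; rewrite /avg; apply/andP; split.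
  apply: divr_ge0 => //; apply: sumr_ge0 => i _; by case/andP: (hf i).
rewrite ler_pdivrMr ?ltr0Sn // mul1r.
have -> : n.+1%:R = \sum_(i < n.+1) (1 : RR).
  by rewrite sumr_const card_ord.
by apply: ler_sum => i _; case/andP: (hf i).
Qed.

Lemma avgD f g n : avg (fun k => f k + g k) n = avg f n + avg g n.
Proof. by rewrite /avg big_split /= mulrDl. Qed.

Lemma avgS f n : avg (fun k => f k.+1) n - avg f n = (f n.+1 - f 0%N) / n.+1%:R.
Proof.
rewrite /avg -mulrBl; congr (_ * _).
have E1 : \sum_(i < n.+2) f i = \sum_(i < n.+1) f i + f n.+1 by rewrite big_ord_recr.
have E2 : \sum_(i < n.+2) f i = f 0%N + \sum_(i < n.+1) f (bump 0 i) by rewrite big_ord_recl.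
have -> : \sum_(i < n.+1) f i.+1 = \sum_(i < n.+1) f (bump 0 i) by [].
move: E1 E2; set S := \sum_(i < n.+2) f i.
set s1 := \sum_(i < n.+1) f (bump 0 i); set s2 := \sum_(i < n.+1) f i.
move=> E1 E2; lra.
Qed.

Definition b01' (f : nat -> RR) := forall n, 0 <= f n <= 1.

Lemma exists_mean : exists m : (nat -> RR) -> RR,
  (forall f, b01' f -> 0 <= m f <= 1) /\ m (fun _ => 1) = 1 /\
  (forall f g, b01' f -> b01' g -> m (fun n => f n + g n) = m f + m g) /\
  (forall f, b01' f -> m (fun n => f n.+1) = m f).
Proof.
have [G [GU sG]] := @ultraFilterLemma nat \oo _.
exists (fun f => lim (avg f @ G)).
have key f : b01' f -> exists l : RR, 0 <= l <= 1 /\ avg f @ G --> l.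
  by move=> hf; apply: ultra_bounded; apply: avg_bound.
split; [|split; [|split]].
- move=> f /key [l [hl cl]]; by rewrite (cvg_lim (@Rhausdorff RR) cl).
- have -> : avg (fun _ => 1) = fun _ => 1.
    apply: funext => n; rewrite /avg sumr_const card_ord divff //.
  apply: (cvg_lim (@Rhausdorff RR)); exact: cvg_cst.
- move=> f g /key [lf [_ cf]] /key [lg [_ cg]].
  have -> : avg (fun n => f n + g n) = avg f + avg g.
    by apply: funext => n; rewrite avgD.
  rewrite (cvg_lim (@Rhausdorff RR) cf) (cvg_lim (@Rhausdorff RR) cg).
  apply: (cvg_lim (@Rhausdorff RR)). exact: (cvgD cf cg).
- move=> f hf; have [lf [_ cf]] := key f hf.
  set d := fun n => avg (fun k => f k.+1) n - avg f n.
  have d0 : d @ \oo --> 0.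
    apply: (@squeeze_cvgr _ _ _ _ (fun n => - harmonic n) (@harmonic RR)).
    + apply: nearW => n; rewrite /d avgS /=.
      have := hf n.+1; have := hf 0%N.
      have hp : 0 < (n.+1%:R : RR)^-1 by rewrite invr_gt0 ltr0Sn.
      move: hp; set h := (n.+1%:R : RR)^-1 => hp /andP [a1 a2] /andP [b1 b2].
      apply/andP; split; nra.
    + rewrite -oppr0; apply: cvgN; exact: cvg_harmonic.
    + exact: cvg_harmonic.
  have dG : d @ G --> 0 := fun A hA => sG _ (d0 A hA).
  have -> : avg (fun k => f k.+1) = d + avg f.
    by apply: funext => n; rewrite /d /= subrK.
  rewrite (cvg_lim (@Rhausdorff RR) cf).
  apply: (cvg_lim (@Rhausdorff RR)); have := cvgD dG cf; rewrite add0r; exact.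
Qed.

End M.

Lemma mean_exists : exists m, MeanProps m.
Proof.
have [m [mB [m1 [mD mS]]]] := @exists_mean Rdefinitions.R.
have cv f : b01 f -> b01' f.
  by move=> hf n; have [h1 h2] := hf n; apply/andP; split; apply/RleP.
exists m; split; [|split; [exact: m1|split]].
- move=> f /cv /mB /andP [h1 h2]; split; exact/RleP.
- by move=> f g /cv hf /cv hg; apply: mD.
- by move=> f /cv hf; apply: mS.
Qed.
End MC.

Theorem mainTheorem17 (k : nat) (hk : (1 <= k)%nat) :
  left_fairly_amenable (fcs_add k) /\ right_fairly_amenable (fcs_add k).
Proof.
  destruct MC.mean_exists as [m [mB [m1 [mD mS]]]].
  exact (final m mB m1 mD mS k hk).
Qed.
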